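(* There exist a financial system $S$ in the base model (all contracts of the same priority), a bank $v$ and a number $x>0$ such that: $S$ has exactly two solutions $r_1\neq r_2$, with $q_v(r_2)=0$; and the system $S'$ obtained from $S$ by replacing $e_v$ with $e_v+x$ (everything else unchanged) has exactly one solution $r'$, which satisfies $r'=r_1$ and $q'_v(r')>x$, where $q'_v$ is the payoff of $v$ in $S'$.
   Context: A financial system with payment priorities consists of: a finite set $V$ of banks; external assets $e_v\ge 0$ for each $v\in V$; a number $P\ge 1$ of priority levels; and a finite set of contracts, each of which is either a debt contract from a debtor $u$ to a creditor $v\neq u$ with weight $c>0$, or a credit default swap (CDS) from a debtor $u$ to a creditor $v\neq u$ in reference to a bank $w\notin\{u,v\}$ (the reference entity) with weight $c>0$. Every contract has a priority in $\{1,\dots,P\}$ (1 is the highest priority). It is assumed that every bank that is the reference entity of some CDS is the debtor of at least one debt contract of positive weight. Given a recovery rate vector $r\in[0,1]^V$: the liability of a contract $k$ is $l_k(r)=c$ if $k$ is a debt of weight $c$, and $l_k(r)=c\,(1-r_w)$ if $k$ is a CDS of weight $c$ in reference to $w$. For a bank $v$, $l_v(r)$ is the sum of the liabilities of the contracts with debtor $v$; $l_v^{(\rho)}(r)$ is the sum of the liabilities of contracts with debtor $v$ and priority $\rho$; and $l_v^{(\le\rho)}(r)=\sum_{i=1}^{\rho}l_v^{(i)}(r)$ (with $l_v^{(\le 0)}=0$). The payment on a contract $k$ with debtor $v$ and priority $\rho$ is $p_k(r)=l_k(r)\cdot\min\{1,\max\{0,(r_v l_v(r)-l_v^{(\le\rho-1)}(r))/l_v^{(\rho)}(r)\}\}$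 (and $p_k(r)=0$ if $l_v^{(\rho)}(r)=0$). The assets of $v$ are $a_v(r)=e_v+\sum_k p_k(r)$, summing over contracts $k$ with creditor $v$. A vector $r\in[0,1]^V$ is a solution (clearing vector) if for every $v\in V$: $r_v=1$ when $a_v(r)\ge l_v(r)$, and $r_v=a_v(r)/l_v(r)$ when $a_v(r)<l_v(r)$. The payoff of $v$ is $q_v(r)=\max\{a_v(r)-l_v(r),0\}$. When $P=1$, payments reduce to $p_k(r)=r_v\,l_k(r)$ (principle of proportionality); this is called the base model. *)

(* Defs.v *)
From Stdlib Require Import Reals Lra List Arith.
Open Scope R_scope.

(* Banks are the natural numbers 0 .. nbanks-1.
   A contract is a debt (cref = None) or a CDS in reference to bank w
   (cref = Some w). *)
Record contract := Contract {
  cdebtor : nat;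
  ccreditor : nat;
  cref : option nat;
  cweight : R;
  cprio : nat }.

Record system := System {
  nbanks : nat;
  ext : nat -> R;
  nprio : nat;
  contracts : list contract }.

Definition wf_contract (S : system) (k : contract) : Prop :=
  (cdebtor k < nbanks S)%nat /\ (ccreditor k < nbanks S)%nat /\
  cdebtor k <> ccreditor k /\ 0 < cweight k /\
  (1 <= cprio k <= nprio S)%nat /\
  match cref k with
  | None => True
  | Some w => (w < nbanks S)%nat /\ w <> cdebtor k /\ w <> ccreditor k
  end.

Definition wf_system (S : system) : Prop :=
  (1 <= nprio S)%nat /\
  (forall v, (v < nbanks S)%nat -> 0 <= ext S v) /\
  (forall k, In k (contracts S) -> wf_contract S k) /\
  (forall k w, In k (contracts S) -> cref k = Some w ->
     exists k', In k' (contracts S) /\ cdebtor k' = w /\ cref k' = None /\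
                0 < cweight k').

Definition base_model (S : system) : Prop := nprio S = 1%nat.

(* recovery rate vectors: functions nat -> R, only entries < nbanks matter *)
Definition liab (k : contract) (r : nat -> R) : R :=
  match cref k with
  | None => cweight k
  | Some w => cweight k * (1 - r w)
  end.

Definition sum_contracts (S : system) (f : contract -> R) : R :=
  fold_right (fun k acc => f k + acc) 0 (contracts S).

Definition lv (S : system) (v : nat) (r : nat -> R) : R :=
  sum_contracts S (fun k => if Nat.eqb (cdebtor k) v then liab k r else 0).

Definition lvp (S : system) (v rho : nat) (r : nat -> R) : R :=
  sum_contracts S (fun k =>
    if andb (Nat.eqb (cdebtor k) v) (Nat.eqb (cprio k) rho) then liab k r else 0).

Fixpoint lvle (Sy : system) (v rho : nat) (r : nat -> R) : R :=
  match rho with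
  | O => 0
  | Datatypes.S i => lvle Sy v i r + lvp Sy v (Datatypes.S i) r
  end.

Definition payment (S : system) (k : contract) (r : nat -> R) : R :=
  let v := cdebtor k in
  let rho := cprio k in
  if Req_EM_T (lvp S v rho r) 0 then 0
  else liab k r *
       Rmin 1 (Rmax 0 ((r v * lv S v r - lvle S v (rho - 1) r) / lvp S v rho r)).

Definition assets (S : system) (v : nat) (r : nat -> R) : R :=
  ext S v + sum_contracts S (fun k =>
    if Nat.eqb (ccreditor k) v then payment S k r else 0).

Definition is_solution (S : system) (r : nat -> R) : Prop :=
  forall v, (v < nbanks S)%nat ->
    0 <= r v <= 1 /\
    (assets S v r >= lv S v r -> r v = 1) /\
    (assets S v r < lv S v r -> r v = assets S v r / lv S v r).

Definition payoff (S : system) (v : nat) (r : nat -> R) : R :=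
  Rmax (assets S v r - lv S v r) 0.

(* equality of recovery vectors as elements of [0,1]^V *)
Definition same_vec (S : system) (r1 r2 : nat -> R) : Prop :=
  forall v, (v < nbanks S)%nat -> r1 v = r2 v.

Definition add_ext (S : system) (v : nat) (x : R) : system :=
  System (nbanks S) (fun u => if Nat.eqb u v then ext S u + x else ext S u)
         (nprio S) (contracts S).

(* Main.v *)
Require Import Defs.
From Stdlib Require Import Reals Lra Psatz.
Open Scope R_scope.

Definition cl : list contract :=
  Contract 0 1 None 1 1 :: Contract 0 2 (Some 1%nat) 3 1 :: Contract 1 2 None 1 1 :: nil.

Definition S0 : system := System 3 (fun u => if Nat.eqb u 0 then 4/3 else 0) 1 cl.

Lemma mm t L : L <> 0 -> 0 <= t <= 1 -> Rmin 1 (Rmax 0 ((t*L - 0)/L)) = t.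
Proof.
  intros HL Ht. replace ((t*L-0)/L) with t by (field; auto).
  rewrite Rmax_right by lra. rewrite Rmin_right by lra. reflexivity.
Qed.

Ltac crunch T H :=
  unfold assets, payment, lvp, lv, sum_contracts, liab; rewrite H; simpl;
  repeat (destruct (Req_dec_T _ _); [lra|]);
  repeat rewrite mm by lra; ring.

Section L.
Variable T : system.
Hypothesis H : contracts T = cl.
Variable r : nat -> R.
Hypothesis H0 : 0 <= r 0%nat <= 1.
Hypothesis H1 : 0 <= r 1%nat <= 1.

Lemma lv0 : lv T 0 r = 4 - 3 * r 1%nat.
Proof. unfold lv, sum_contracts, liab; rewrite H; simpl; ring. Qed.
Lemma lv1 : lv T 1 r = 1.
Proof. unfold lv, sum_contracts, liab; rewrite H; simpl; ring. Qed.
Lemma lv2 : lv T 2 r = 0.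
Proof. unfold lv, sum_contracts, liab; rewrite H; simpl; ring. Qed.
Lemma as0 : assets T 0 r = ext T 0.
Proof using H H0 H1. crunch T H. Qed.
Lemma as1 : assets T 1 r = ext T 1 + r 0%nat.
Proof using H H0 H1. crunch T H. Qed.
Lemma as2 : assets T 2 r = ext T 2 + 3 * (1 - r 1%nat) * r 0%nat + r 1%nat.
Proof using H H0 H1. crunch T H. Qed.
End L.

Lemma sol_char (T : system) (E : R) r :
  contracts T = cl -> nbanks T = 3%nat -> ext T 0 = E -> ext T 1 = 0 -> ext T 2 = 0 ->
  0 < E ->
  is_solution T r ->
  r 1%nat = r 0%nat /\ r 2%nat = 1 /\
  ((E >= 4 - 3 * r 0%nat /\ r 0%nat = 1) \/
   (E < 4 - 3 * r 0%nat /\ r 0%nat * (4 - 3 * r 0%nat) = E)).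
Proof.
  intros Hc Hn He0 He1 He2 HE Hs.
  destruct (Hs 0%nat ltac:(lia)) as [R0 [A0 B0]].
  destruct (Hs 1%nat ltac:(lia)) as [R1 [A1 B1]].
  destruct (Hs 2%nat ltac:(lia)) as [R2 [A2 B2]].
  rewrite (lv0 T Hc r), (as0 T Hc r R0 R1) in *.
  rewrite (lv1 T Hc r), (as1 T Hc r R0 R1) in *.
  rewrite (lv2 T Hc r), (as2 T Hc r R0 R1) in *.
  rewrite He0, He1, He2 in *.
  assert (E1 : r 1%nat = r 0%nat).
  { destruct (Rle_lt_dec 1 (0 + r 0%nat)).
    - rewrite A1 by lra. lra.
    - rewrite B1 by lra. field. }
  split; [exact E1|]. split.
  { apply A2. nra. }
  rewrite E1 in *.
  destruct (Rle_lt_dec (4 - 3 * r 0%nat) E).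
  - left. split; [lra|]. apply A0; lra.
  - right. split; [lra|]. assert (Hb := B0 ltac:(lra)). rewrite Hb at 1. field. lra.
Qed.

Lemma sol_good (T : system) (E : R) :
  contracts T = cl -> nbanks T = 3%nat -> ext T 0 = E -> ext T 1 = 0 -> ext T 2 = 0 ->
  1 <= E -> is_solution T (fun _ => 1).
Proof.
  intros Hc Hn He0 He1 He2 HE v Hv. rewrite Hn in Hv.
  assert (R0 : 0 <= 1 <= 1) by lra.
  destruct v as [|[|[|v]]]; try lia.
  - rewrite (lv0 T Hc _), (as0 T Hc _ R0 R0). lra.
  - rewrite (lv1 T Hc _), (as1 T Hc _ R0 R0). lra.
  - rewrite (lv2 T Hc _), (as2 T Hc _ R0 R0). lra.
Qed.

Definition rbad : nat -> R := fun u => if Nat.eqb u 2 then 1 else 2/3.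

Lemma sol_bad : is_solution S0 rbad.
Proof.
  intros v Hv. simpl in Hv.
  assert (R0 : 0 <= rbad 0%nat <= 1) by (unfold rbad; simpl; lra).
  assert (R1 : 0 <= rbad 1%nat <= 1) by (unfold rbad; simpl; lra).
  destruct v as [|[|[|v]]]; try lia.
  - rewrite (lv0 S0 eq_refl _), (as0 S0 eq_refl _ R0 R1). unfold rbad; simpl.
    split; [lra|]. split; intros; lra.
  - rewrite (lv1 S0 eq_refl _), (as1 S0 eq_refl _ R0 R1). unfold rbad; simpl.
    split; [lra|]. split; intros; lra.
  - rewrite (lv2 S0 eq_refl _), (as2 S0 eq_refl _ R0 R1). unfold rbad; simpl.
    split; [lra|]. split; intros; lra.
Qed.

Theorem mainTheorem6 :
  exists (S : system) (v : nat) (x : R),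
    wf_system S /\ base_model S /\ (v < nbanks S)%nat /\ 0 < x /\
    exists r1 r2 : nat -> R,
      is_solution S r1 /\ is_solution S r2 /\ ~ same_vec S r1 r2 /\
      (forall r, is_solution S r -> same_vec S r r1 \/ same_vec S r r2) /\
      payoff S v r2 = 0 /\
      exists r' : nat -> R,
        is_solution (add_ext S v x) r' /\
        (forall r, is_solution (add_ext S v x) r -> same_vec S r r') /\
        same_vec S r' r1 /\
        payoff (add_ext S v x) v r' > x.
Proof.
  exists S0, 0%nat, 1.
  split.
  { split; [simpl; lia|]. split.
    { intros v Hv. simpl. destruct (Nat.eqb v 0); lra. }
    split.
    { intros k Hk. simpl in Hk.
      destruct Hk as [<-|[<-|[<-|[]]]]; unfold wf_contract; simpl;
        repeat split; try lia; try lra. }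
    intros k w Hk Hw. simpl in Hk.
    destruct Hk as [<-|[<-|[<-|[]]]]; simpl in Hw; try discriminate.
    injection Hw as <-. exists (Contract 1 2 None 1 1). simpl.
    repeat split; auto; lra. }
  split; [reflexivity|]. split; [simpl; lia|]. split; [lra|].
  exists (fun _ => 1), rbad.
  split. { apply (sol_good S0 (4/3)); auto; simpl; lra. }
  split. { exact sol_bad. }
  split. { intros Hs. specialize (Hs 0%nat ltac:(simpl; lia)). unfold rbad in Hs; simpl in Hs. lra. }
  split.
  { intros r Hr.
    destruct (sol_char S0 (4/3) r eq_refl eq_refl eq_refl eq_refl eq_refl ltac:(lra) Hr)
      as [E1 [E2 [[_ E0]|[_ E0]]]].
    - left. intros v Hv. simpl in Hv. destruct v as [|[|[|v]]]; try lia; lra.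
    - right. assert (F : r 0%nat = 2/3) by nra.
      intros v Hv. simpl in Hv. unfold rbad. destruct v as [|[|[|v]]]; try lia; simpl; lra. }
  split.
  { unfold payoff.
    assert (R0 : 0 <= rbad 0%nat <= 1) by (unfold rbad; simpl; lra).
    assert (R1 : 0 <= rbad 1%nat <= 1) by (unfold rbad; simpl; lra).
    rewrite (lv0 S0 eq_refl _), (as0 S0 eq_refl _ R0 R1). unfold rbad; simpl.
    apply Rmax_right. lra. }
  exists (fun _ => 1).
  assert (Hc : contracts (add_ext S0 0 1) = cl) by reflexivity.
  split. { apply (sol_good _ (4/3+1) Hc); auto; simpl; lra. }
  split.
  { intros r Hr.
    destruct (sol_char _ (4/3+1) r Hc eq_refl eq_refl eq_refl eq_refl ltac:(lra) Hr)
      as [E1 [E2 [[_ E0]|[_ E0]]]].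
    - intros v Hv. simpl in Hv. destruct v as [|[|[|v]]]; try lia; lra.
    - exfalso. assert (0 <= (3 * r 0%nat - 2)^2) by (apply pow2_ge_0). nra. }
  split. { intros v _. reflexivity. }
  unfold payoff.
  assert (R0 : 0 <= 1 <= 1) by lra.
  rewrite (lv0 _ Hc _), (as0 _ Hc _ R0 R0). simpl.
  rewrite Rmax_left; lra.
Qed.
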